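(* Let $A\in\mathbb Z^{d\times n}$ with $\ker(A)\cap\mathbb N^n=\{0\}$. Then $S(A)\subseteq D(A)\subseteq D^w(A)\subseteq G(A)$.
   Context: For $z\in\mathbb Z^n$, $z^\pm\in\mathbb N^n$ are the unique vectors with disjoint supports and $z=z^+-z^-$; $\|\cdot\|$ is the $1$-norm; $\le$ is coordinatewise. For $z\in\ker(A)$ and $u,v\in\ker(A)\setminus\{0\}$ with $z=u+v$: it is a proper conformal decomposition if $z^+=u^++v^+$ and $z^-=u^-+v^-$; a proper semi-conformal decomposition if for every $i$, $u_i>0$ implies $v_i\ge0$; a positive (resp. negative) distance decomposition if $u^+\le z^+$ (resp. $u^-\le z^-$) and $\|v\|<\|z\|$. $S(A)$ is the set of nonzero $z\in\ker(A)$ with no proper semi-conformal decomposition; $G(A)$ the set of nonzero $z\in\ker(A)$ with no proper conformal decomposition; $D^+(A)$ (resp. $D^-(A)$) the set of nonzero $z\in\ker(A)$ with no positive (resp. negative) distance decomposition; $D(A)=D^+(A)\cap D^-(A)$ and $D^w(A)=D^+(A)\cup D^-(A)$. *)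

(* Defs.v *)
From mathcomp Require Import all_boot all_order all_algebra.
Set Implicit Arguments. Unset Strict Implicit. Unset Printing Implicit Defensive.
Import Order.TTheory GRing.Theory Num.Theory.
Local Open Scope ring_scope.

Definition vpos n (z : 'cV[int]_n) : 'cV[int]_n := \col_i Num.max (z i 0) 0.
Definition vneg n (z : 'cV[int]_n) : 'cV[int]_n := \col_i Num.max (- z i 0) 0.

Definition norm1 n (z : 'cV[int]_n) : int := \sum_i `|z i 0|.

Definition vle n (u v : 'cV[int]_n) : Prop := forall i, u i 0 <= v i 0.

Definition inker d n (A : 'M[int]_(d, n)) (z : 'cV[int]_n) : Prop := A *m z = 0.

Definition kdecomp d n (A : 'M[int]_(d, n)) (z u v : 'cV[int]_n) : Prop :=
  [/\ inker A u, inker A v, u != 0, v != 0 & z = u + v].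

Definition proper_conformal d n (A : 'M[int]_(d, n)) (z u v : 'cV[int]_n) :=
  kdecomp A z u v /\ vpos z = vpos u + vpos v /\ vneg z = vneg u + vneg v.

Definition proper_semiconformal d n (A : 'M[int]_(d, n)) (z u v : 'cV[int]_n) :=
  kdecomp A z u v /\ (forall i, 0 < u i 0 -> 0 <= v i 0).

Definition pos_distance d n (A : 'M[int]_(d, n)) (z u v : 'cV[int]_n) :=
  kdecomp A z u v /\ vle (vpos u) (vpos z) /\ norm1 v < norm1 z.

Definition neg_distance d n (A : 'M[int]_(d, n)) (z u v : 'cV[int]_n) :=
  kdecomp A z u v /\ vle (vneg u) (vneg z) /\ norm1 v < norm1 z.

Definition inS d n (A : 'M[int]_(d, n)) (z : 'cV[int]_n) : Prop :=
  [/\ z != 0, inker A z & forall u v, ~ proper_semiconformal A z u v].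
Definition inG d n (A : 'M[int]_(d, n)) (z : 'cV[int]_n) : Prop :=
  [/\ z != 0, inker A z & forall u v, ~ proper_conformal A z u v].
Definition inDp d n (A : 'M[int]_(d, n)) (z : 'cV[int]_n) : Prop :=
  [/\ z != 0, inker A z & forall u v, ~ pos_distance A z u v].
Definition inDm d n (A : 'M[int]_(d, n)) (z : 'cV[int]_n) : Prop :=
  [/\ z != 0, inker A z & forall u v, ~ neg_distance A z u v].
Definition inD d n (A : 'M[int]_(d, n)) (z : 'cV[int]_n) : Prop :=
  inDp A z /\ inDm A z.
Definition inDw d n (A : 'M[int]_(d, n)) (z : 'cV[int]_n) : Prop :=
  inDp A z \/ inDm A z.

(* Main.v *)
Require Import Defs.
From mathcomp Require Import all_boot all_order all_algebra.
From mathcomp Require Import zify ring lra.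
Import Order.TTheory GRing.Theory Num.Theory.
Local Open Scope ring_scope.

Lemma vcoord {n} {z u v : 'cV[int]_n} i : z = u + v -> v i 0 = z i 0 - u i 0.
Proof. by move=> ->; rewrite mxE addrC addrK. Qed.

Lemma max0E (x : int) : Num.max x 0 = if 0 <= x then x else 0.
Proof. by case: leP. Qed.

Lemma aux_pos (x y : int) : 0 < y -> Num.max y 0 <= Num.max x 0 -> 0 <= x - y.
Proof. by rewrite !max0E; case: (leP 0 y) => ?; case: (leP 0 x) => ? /=; lia. Qed.

Lemma aux_neg (x y : int) : 0 < x - y -> Num.max (- y) 0 <= Num.max (- x) 0 -> 0 <= y.
Proof. by rewrite !max0E; case: (leP 0 (- y)) => ?; case: (leP 0 (- x)) => ? /=; lia. Qed.

Lemma aux_abs (x : int) : `|x| = Num.max x 0 + Num.max (- x) 0.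
Proof.
rewrite !max0E; case: (leP 0 x) => h.
  by rewrite ger0_norm //; case: (leP 0 (- x)) => ? /=; lia.
by rewrite ltr0_norm //; case: (leP 0 (- x)) => ? /=; lia.
Qed.

Lemma pos_sc d n (A : 'M[int]_(d, n)) z u v :
  pos_distance A z u v -> proper_semiconformal A z u v.
Proof.
move=> [[Hu Hv u0 v0 E] [Hle _]]; split; first by split.
move=> i ui; rewrite (vcoord i E).
have := Hle i; rewrite !mxE; exact: aux_pos.
Qed.

Lemma neg_sc d n (A : 'M[int]_(d, n)) z u v :
  neg_distance A z u v -> proper_semiconformal A z v u.
Proof.
move=> [[Hu Hv u0 v0 E] [Hle _]]; split; first by split=> //; rewrite addrC.
move=> i vi; have := Hle i; rewrite !mxE.
rewrite (vcoord i E) in vi; exact: aux_neg.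
Qed.

Lemma norm1E n (z : 'cV[int]_n) : norm1 z = \sum_i (vpos z i 0 + vneg z i 0).
Proof.
by apply: eq_bigr => i _; rewrite !mxE aux_abs.
Qed.

Lemma norm1_gt0 n (u : 'cV[int]_n) : u != 0 -> 0 < norm1 u.
Proof.
move=> u0; rewrite lt_def sumr_ge0 // andbT.
apply/negP => /eqP; rewrite /norm1 => /eqP.
rewrite psumr_eq0 // => /allP H; apply/negP: u0; rewrite negbK.
apply/eqP/matrixP => i j; rewrite (ord1 j) mxE.
by have := H i (mem_index_enum i); rewrite normr_eq0 => /eqP.
Qed.

Lemma conf_pos {d n} {A : 'M[int]_(d, n)} {z u v} :
  proper_conformal A z u v -> pos_distance A z u v /\ neg_distance A z u v.
Proof.
move=> [K [Ep En]].
have Hn : norm1 z = norm1 u + norm1 v.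
  rewrite !norm1E -big_split /=; apply: eq_bigr => i _.
  rewrite Ep En !mxE; set a := Num.max _ _; set b := Num.max _ _; set c := Num.max _ _; set e := Num.max _ _.
  by rewrite addrACA.
case: K => Hu Hv u0 v0 E.
have nlt : norm1 v < norm1 z by rewrite Hn -ltrBlDr subrr norm1_gt0.
have k : kdecomp A z u v by split.
split; split=> //; split=> // i.
  by rewrite Ep [X in _ <= X]mxE lerDl mxE le_max lexx orbT.
by rewrite En [X in _ <= X]mxE lerDl mxE le_max lexx orbT.
Qed.

Theorem proposition8p6 (d n : nat) (A : 'M[int]_(d, n)) :
  (* ker(A) ∩ N^n = {0} *)
  (forall z : 'cV[int]_n, inker A z -> (forall i, 0 <= z i 0) -> z = 0) ->
  (forall z, inS A z -> inD A z) /\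
  (forall z, inD A z -> inDw A z) /\
  (forall z, inDw A z -> inG A z).
Proof.
move=> _; split; last split.
- move=> z [z0 Kz H]; split; split=> // u v P.
    by apply: (H u v); apply: pos_sc.
  by apply: (H v u); apply: neg_sc.
- by move=> z [] ?; left.
- move=> z [] [z0 Kz H]; split=> // u v P; have [P1 P2] := conf_pos (A:=A) P.
    exact: (H u v P1).
  exact: (H u v P2).
Qed.
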